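(* Let $(W,S)$ be a Coxeter group, $w\in W$, and let $s,t$ be two distinct elements of $T=\bigcup_{x\in W}xSx^{-1}$ such that $st$ has finite order $m_{s,t}$. Let $\vec a$ be a reduced expression for $w$. Then: (a) The word $\rho_{s,t}$ appears as a subword of $\operatorname{Invs}\vec a$ at most one time (i.e., in at most one set of positions). (b) The words $\rho_{s,t}$ and $\rho_{t,s}$ cannot both appear as subwords of $\operatorname{Invs}\vec a$.
   Context: $(W,S)$ is a Coxeter group. A reduced expression for $w$ is a tuple $(a_1,\ldots,a_k)\in S^k$ with $w=a_1\cdots a_k$ and $k$ minimal. $\operatorname{Invs}(a_1,\ldots,a_k)=(t_1,\ldots,t_k)$ with $t_i=(a_1\cdots a_{i-1})a_i(a_1\cdots a_{i-1})^{-1}$. For distinct $s,t\in T$ with $m_{s,t}<\infty$, $\rho_{s,t}=((st)^0s,(st)^1s,\ldots,(st)^{m_{s,t}-1}s)$. A subword of $(x_1,\ldots,x_k)$ is a word $(x_{i_1},\ldots,x_{i_p})$ with $i_1<\cdots<i_p$ (not necessarily contiguous). *)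

(* Defs.v *)
From HB Require Import structures.
From mathcomp Require Import all_boot.
From mathcomp Require Import monoid.

Set Implicit Arguments.
Unset Strict Implicit.
Unset Printing Implicit Defensive.

Local Open Scope group_scope.

Section Coxeter.
Variable W : groupType.

Definition wprod (l : seq W) : W := foldr (fun x y => x * y) 1 l.

Definition word_in (S : W -> Prop) (l : seq W) : Prop := forall x, x \in l -> S x.

Definition has_order (x : W) (m : nat) : Prop :=
  (0 < m)%N /\ x ^+ m = 1 /\ (forall k, (0 < k < m)%N -> x ^+ k <> 1).

(* (W,S) is a Coxeter system: S is a set of involutions generating W, and
   W has the presentation < S | s^2 = 1, (st)^{m_{s,t}} = 1 (m_{s,t} < oo) >,
   where m_{s,t} is the order of st; expressed via the universal property
   of the presentation (any assignment into a group respecting the relations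
   extends to a group homomorphism). *)
Definition coxeter_system (S : W -> Prop) : Prop :=
  [/\ forall s, S s -> s <> 1 /\ s * s = 1,
      forall w : W, exists l, word_in S l /\ wprod l = w
    & forall (H : groupType) (f : W -> H),
        (forall s, S s -> f s * f s = 1) ->
        (forall s t m, S s -> S t -> has_order (s * t) m -> (f s * f t) ^+ m = 1) ->
        exists phi : W -> H,
          (forall x y, phi (x * y) = phi x * phi y) /\ (forall s, S s -> phi s = f s)].

Definition reflection (S : W -> Prop) (t : W) : Prop :=
  exists x s, S s /\ t = x * s * x^-1.

Definition reduced_expr (S : W -> Prop) (w : W) (a : seq W) : Prop :=
  [/\ word_in S a, wprod a = w
    & forall b, word_in S b -> wprod b = w -> (size a <= size b)%N].

Definition invs (a : seq W) : seq W :=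
  mkseq (fun i => wprod (take i a) * nth 1 a i * (wprod (take i a))^-1) (size a).

Definition rho (s t : W) (m : nat) : seq W := mkseq (fun k => (s * t) ^+ k * s) m.

End Coxeter.

(* Main.v *)
Require Import Defs.
From HB Require Import structures.
From mathcomp Require Import all_boot.
From mathcomp Require Import monoid.

Local Open Scope group_scope.

Section Aux.
Variable W : groupType.

Lemma wprod_cat (l1 l2 : seq W) : wprod (l1 ++ l2) = wprod l1 * wprod l2.
Proof. elim: l1 => [|x l IH] /=; first by rewrite mul1g. by rewrite IH mulgA. Qed.

Definition del (i : nat) (b : seq W) := take i b ++ drop i.+1 b.

Definition tinv (b : seq W) i := wprod (take i b) * nth 1 b i * (wprod (take i b))^-1.

Lemma tinv_del (b : seq W) i : (i < size b)%N -> nth 1 b i * nth 1 b i = 1 ->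
  tinv b i * wprod b = wprod (del i b).
Proof.
move=> lt hinv; rewrite /tinv /del.
have -> : wprod b = wprod (take i b) * (nth 1 b i * wprod (drop i.+1 b)).
  by rewrite -[in LHS](cat_take_drop i b) wprod_cat (drop_nth 1 lt).
rewrite wprod_cat !mulgA mulgVK -[_ * nth 1 b i * nth 1 b i]mulgA hinv mulg1 //.
Qed.

Lemma reduced_uniq (S : W -> Prop) w a :
  (forall s, S s -> s * s = 1) -> reduced_expr S w a -> uniq (invs a).
Proof.
move=> Sinv [wa wpa red].
rewrite /invs /mkseq map_inj_in_uniq ?iota_uniq //.
have key : forall i j, (i < j)%N -> (j < size a)%N -> tinv a i = tinv a j -> False.
  move=> i j ij ja eqt.
  have ia : (i < size a)%N by apply: ltn_trans ja.
  have invx : forall k, (k < size a)%N -> nth 1 a k * nth 1 a k = 1.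
    by move=> k ka; apply: Sinv; apply: wa; apply: mem_nth.
  have szd : forall k (b : seq W), (k < size b)%N -> size (del k b) = (size b).-1.
    move=> k b kb; rewrite /del size_cat size_take kb size_drop.
    move: kb; case: (size b) => // n; rewrite subSS /= => kb; rewrite subnKC //.
  have sub : forall k (b : seq W), {subset del k b <= b}.
    move=> k b x; rewrite /del mem_cat => /orP [/mem_take | /mem_drop] //.
  have hj := @tinv_del a j ja (invx j ja).
  have tk : take i (del j a) = take i a.
    by rewrite /del take_cat size_take ja ij take_takel // ltnW.
  have nk : nth 1 (del j a) i = nth 1 a i.
    by rewrite /del nth_cat size_take ja ij nth_take.
  have sdj := szd j a ja.
  have id : (i < size (del j a))%N by rewrite sdj -ltnS prednK // (leq_ltn_trans _ ja).
  have hii : nth 1 (del j a) i * nth 1 (del j a) i = 1 by rewrite nk invx.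
  have hi := @tinv_del (del j a) i id hii.
  have e : tinv (del j a) i = tinv a i by rewrite /tinv tk nk.
  rewrite e eqt in hi.
  have tt : tinv a j * tinv a j = 1.
    by rewrite /tinv !mulgA mulgVK -[_ * nth 1 a j * nth 1 a j]mulgA invx // mulg1 mulgV.
  have hw : wprod (del i (del j a)) = w by rewrite -hi -hj mulgA tt mul1g.
  have wd : word_in S (del i (del j a)).
    by move=> x /sub /sub; apply: wa.
  have := red _ wd hw.
  rewrite (szd i _ id) sdj.
  case: (size a) ia => // n _ /=.
  case: n => //= n.
  by rewrite ltnNge leqnSn.
move=> x y; rewrite !mem_iota !add0n => /= hx hy.
change (tinv a x = tinv a y -> x = y) => exy.
case: (ltngtP x y) => // hxy.
  by case: (key _ _ hxy hy exy).
by case: (key _ _ hxy hx (esym exy)).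
Qed.

Lemma mask_uniq_eq (L : seq W) (m1 m2 : bitseq) : uniq L ->
  size m1 = size L -> size m2 = size L -> mask m1 L = mask m2 L -> m1 = m2.
Proof.
elim: L m1 m2 => [|x L IH] [|b1 m1] [|b2 m2] //= /andP [xL uL] [s1] [s2].
have F : forall c1 c2 (n1 n2 : bitseq), size n1 = size L -> size n2 = size L ->
   (if c1 then x :: mask n1 L else mask n1 L) = (if c2 then x :: mask n2 L else mask n2 L) ->
   c1 = true -> c2 = false -> False.
  move=> c1 c2 n1 n2 _ _ e h1 h2; rewrite h1 h2 in e.
  have : x \in mask n2 L by rewrite -e mem_head.
  by move/mem_mask; rewrite (negbTE xL).
case: b1; case: b2 => e.
- by case: e => /(IH _ _ uL s1 s2) ->.
- by case: (F true false _ _ s1 s2 e).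
- by case: (F true false _ _ s2 s1 (esym e)).
- by rewrite (IH _ _ uL s1 s2 e).
Qed.

Lemma pair_order (L : seq W) x y : uniq L ->
  subseq [:: x; y] L -> subseq [:: y; x] L -> x = y.
Proof.
elim: L => [|z L IH] //= /andP [zL uL].
case: (eqVneq x z) => [-> | xz]; case: (eqVneq y z) => [-> | yz] //.
- move=> _ /mem_subseq H.
  by move: zL; rewrite (H z) // !inE eqxx orbT.
- move=> /mem_subseq H _.
  by move: zL; rewrite (H z); rewrite // !inE eqxx orbT.
- exact: IH.
Qed.

Lemma rho_pair (s t : W) m : s * s = 1 -> t * t = 1 -> s <> t ->
  has_order (s * t) m -> subseq [:: s; t] (rho s t m).
Proof.
move=> ss tt st [m0 [hm _]].
case: m m0 hm => // [[|n]] _ hm.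
  exfalso; apply: st; move: hm; rewrite expg1 => /mulg1_eq <-; by rewrite (mulg1_eq ss).
have -> : rho s t n.+2 = s :: [seq (s * t) ^+ k * s | k <- iota 1 n.+1].
  by rewrite /rho /mkseq /= mul1g.
apply: (@cat_subseq _ [:: s] _ [:: s]) => //; rewrite sub1seq.
apply/mapP; exists (n.+1); first by rewrite mem_iota add1n ltnSn andbT.
have -> : (s * t) ^+ n.+1 * s = (s * t) ^+ n.+1 * s * (t * t) by rewrite tt mulg1.
by rewrite mulgA -(mulgA _ s t) -expgSr hm mul1g.
Qed.

End Aux.

Theorem proposition3p7 (W : groupType) (S : W -> Prop) (w s t : W) (mst mts : nat)
  (a : seq W) :
  coxeter_system S ->
  reflection S s -> reflection S t -> s <> t ->
  has_order (s * t) mst -> has_order (t * s) mts ->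
  reduced_expr S w a ->
  (* (a) rho_{s,t} occurs as a subword of Invs a in at most one set of positions *)
  (forall m1 m2 : bitseq,
      size m1 = size (invs a) -> size m2 = size (invs a) ->
      mask m1 (invs a) = rho s t mst -> mask m2 (invs a) = rho s t mst ->
      m1 = m2)
  /\
  (* (b) rho_{s,t} and rho_{t,s} are not both subwords of Invs a *)
  ~ (subseq (rho s t mst) (invs a) /\ subseq (rho t s mts) (invs a)).
Proof.
move=> [Sinv _ _] rs rt st hst hts red.
have Sinv' : forall x, S x -> x * x = 1 by move=> x /Sinv [].
have u := @reduced_uniq W S w a Sinv' red.
have refl_inv : forall r, reflection S r -> r * r = 1.
  move=> r [x [q [Sq ->]]].
  by rewrite -!mulgA mulKg (mulgA q q) Sinv' // mul1g mulgV.
split.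
  move=> m1 m2 s1 s2 e1 e2; apply: (@mask_uniq_eq W (invs a) m1 m2 u s1 s2); by rewrite e1 e2.
move=> [h1 h2].
have p1 := subseq_trans (@rho_pair W s t mst (refl_inv _ rs) (refl_inv _ rt) st hst) h1.
have p2 := subseq_trans (@rho_pair W t s mts (refl_inv _ rt) (refl_inv _ rs) (fun e => st (esym e)) hts) h2.
exact: st (@pair_order W (invs a) s t u p1 p2).
Qed.
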